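(* Let $G$ be a reflection subgroup of $G_7$, and let $n$ be the number of distinct reflection conjugacy classes of $G$. Suppose there exists an integer $m\ge n$ such that $G$ is class-searchable at every length greater than $m$, and such that for every $k\in\{1,\dots,m\}$ the following holds: two length-$k$ reflection factorizations that generate $G$ are Hurwitz equivalent if and only if they factor the same element and have the same multiset of conjugacy classes. Then the same statement holds for every length $k\ge 1$.
   Context: Let $G_7$ be the subgroup of $GL_2(\mathbb{C})$ generated by $s=\begin{bmatrix}1&0\\0&-1\end{bmatrix}$, $t=\frac14\begin{bmatrix}(1+\sqrt3)+(-1+\sqrt3)i & (1+\sqrt3)+(-1+\sqrt3)i\\ (-1+\sqrt3)-(1+\sqrt3)i & (1-\sqrt3)+(1+\sqrt3)i\end{bmatrix}$ and $u=t^{\top}$ (presentation $\langle s,t,u\mid s^2=t^3=u^3=1,\ stu=ust=tus\rangle$, order $144$). A reflection is a linear map of $\mathbb{C}^2$ whose fixed space has dimension $1$; a reflection subgroup of $G_7$ is a subgroup generated by reflections of $G_7$, and its reflection conjugacy classes are its conjugacy classes consisting of reflections. A reflection factorization of $g\in G$ of length $k$ is a tuple $(r_1,\dots,r_k)$ of reflections in $G$ with $r_1\cdots r_k=g$; it generates $\langle r_1,\dots,r_k\rangle$, and (when it generates $G$) its multiset of conjugacy classes is the multiset of $G$-conjugacy classes of its entries. The Hurwitz move $\sigma_i$ sends $(r_1,\dots,r_k)$ to $(r_1,\dots,r_{i-1},r_{i+1},r_{i+1}^{-1}r_ir_{i+1},r_{i+2},\dots,r_k)$; two factorizations are Hurwitz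 equivalent if one is obtained from the other by a finite sequence of Hurwitz moves. $G$ is class-searchable at length $k$ if: whenever $T$ is a length-$k$ reflection factorization generating $G$ and $K$ is a reflection conjugacy class of $G$ containing at least two entries of $T$, then for every $x\in K$ there is a factorization $T'$ Hurwitz equivalent to $T$ whose last entry is $x$ and whose first $k-1$ entries generate $G$. *)

(* Defs.v *)
From mathcomp Require Import all_boot all_order all_algebra all_field.
From Stdlib Require Import Relations Permutation.
From Stdlib Require List.
Set Implicit Arguments. Unset Strict Implicit. Unset Printing Implicit Defensive.
Import Order.TTheory GRing.Theory Num.Theory.
Local Open Scope ring_scope.

Definition mx := 'M[algC]_2.

Definition mx_of_list (L : seq (seq algC)) : mx :=
  \matrix_(i < 2, j < 2) nth 0 (nth [::] L i) j.

Definition r3 : algC := sqrtC 3%:R.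

Definition G7_s : mx := mx_of_list [:: [:: 1; 0]; [:: 0; -1]].
Definition G7_t : mx := (4%:R)^-1 *:
  mx_of_list [:: [:: (1 + r3) + (-1 + r3) * 'i; (1 + r3) + (-1 + r3) * 'i];
                 [:: (-1 + r3) - (1 + r3) * 'i; (1 - r3) + (1 + r3) * 'i]].
Definition G7_u : mx := G7_t^T.

Inductive gen (S : mx -> Prop) : mx -> Prop :=
| gen_one : gen S 1
| gen_elt x : S x -> gen S x
| gen_mul x y : gen S x -> gen S y -> gen S (x * y)
| gen_inv x : gen S x -> gen S (invmx x).

Definition G7 : mx -> Prop := gen (fun x => x = G7_s \/ x = G7_t \/ x = G7_u).

(* A reflection: fixed space {v | g v = v} of dimension 1. *)
Definition is_reflection (g : mx) : Prop := \rank (kermx (g - 1)^T) = 1%N.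

Definition conjugate_in (G : mx -> Prop) (x y : mx) : Prop :=
  exists h, G h /\ x = invmx h * y * h.

Definition num_refl_classes (G : mx -> Prop) (n : nat) : Prop :=
  exists reps : seq mx,
    size reps = n /\
    (forall r, r \in reps -> G r /\ is_reflection r) /\
    (forall i j, (i < n)%N -> (j < n)%N ->
        conjugate_in G (nth 0 reps i) (nth 0 reps j) -> i = j) /\
    (forall r, G r -> is_reflection r -> exists2 c, c \in reps & conjugate_in G r c).

Definition refl_fact (G : mx -> Prop) (T : seq mx) : Prop :=
  forall r, r \in T -> G r /\ is_reflection r.

Definition prodT (T : seq mx) : mx := \prod_(r <- T) r.

Definition generates (G : mx -> Prop) (T : seq mx) : Prop :=
  forall x, G x <-> gen (fun r => r \in T) x.

(* Hurwitz move sigma_{i+1} (0-based index i, requires i+1 < size T). *)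
Definition hmove (i : nat) (T : seq mx) : seq mx :=
  take i T ++ [:: nth 0 T i.+1; invmx (nth 0 T i.+1) * nth 0 T i * nth 0 T i.+1]
    ++ drop i.+2 T.

Definition hstep (T T' : seq mx) : Prop :=
  exists i, (i.+1 < size T)%N /\ T' = hmove i T.

Definition hurwitz_equiv : seq mx -> seq mx -> Prop := clos_refl_trans _ hstep.

Definition same_classes (G : mx -> Prop) (T T' : seq mx) : Prop :=
  exists U, Permutation T U /\ List.Forall2 (conjugate_in G) U T'.

Definition class_searchable (G : mx -> Prop) (k : nat) : Prop :=
  forall T : seq mx, size T = k -> refl_fact G T -> generates G T ->
  forall c, G c -> is_reflection c ->
  (exists i j, (i < j)%N /\ (j < k)%N /\
      conjugate_in G (nth 0 T i) c /\ conjugate_in G (nth 0 T j) c) ->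
  forall x, conjugate_in G x c ->
  exists T', hurwitz_equiv T T' /\ last 0 T' = x /\ generates G (take k.-1 T').

Definition hurwitz_criterion (G : mx -> Prop) (k : nat) : Prop :=
  forall T T' : seq mx, size T = k -> size T' = k ->
  refl_fact G T -> refl_fact G T' -> generates G T -> generates G T' ->
  (hurwitz_equiv T T' <-> prodT T = prodT T' /\ same_classes G T T').

(* Main.v *)
Require Import Defs.
From Stdlib Require Import ZArith Relations Permutation List Classical.
From mathcomp Require Import all_boot all_order all_algebra all_field.
From mathcomp Require Import ssrZ ring zify.
Set Implicit Arguments. Unset Strict Implicit. Unset Printing Implicit Defensive.
Import Order.TTheory GRing.Theory Num.Theory.


Module Comp.
Local Open Scope Z_scope.
Definition Kz := (Z * Z * Z * Z)%type.
Definition Mz := (Kz * Kz * Kz * Kz)%type.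
Definition addK (x y : Kz) : Kz :=
  let: (a,b,c,d) := x in let: (e,f,g,h) := y in (a+e, b+f, c+g, d+h).
Definition mulK (x y : Kz) : Kz :=
  let: (a,b,c,d) := x in let: (e,f,g,h) := y in
  (a*e + 3*(b*f) - c*g - 3*(d*h), a*f + b*e - c*h - d*g,
   a*g + c*e + 3*(b*h) + 3*(d*f), a*h + d*e + b*g + c*f).
Definition div4K (x : Kz) : Kz :=
  let: (a,b,c,d) := x in (a/4, b/4, c/4, d/4).
Definition sc4K (x : Kz) : Kz :=
  let: (a,b,c,d) := x in (4*a, 4*b, 4*c, 4*d).
Definition eqK (x y : Kz) : bool :=
  let: (a,b,c,d) := x in let: (e,f,g,h) := y in
  Z.eqb a e && Z.eqb b f && Z.eqb c g && Z.eqb d h.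
Definition mmZ (A B : Mz) : Mz :=
  let: (a00,a01,a10,a11) := A in let: (b00,b01,b10,b11) := B in
  (addK (mulK a00 b00) (mulK a01 b10), addK (mulK a00 b01) (mulK a01 b11),
   addK (mulK a10 b00) (mulK a11 b10), addK (mulK a10 b01) (mulK a11 b11)).
Definition mapM (f : Kz -> Kz) (A : Mz) : Mz :=
  let: (a,b,c,d) := A in (f a, f b, f c, f d).
Definition eqM (A B : Mz) : bool :=
  let: (a,b,c,d) := A in let: (e,f,g,h) := B in
  eqK a e && eqK b f && eqK c g && eqK d h.
Definition mul4 A B := mapM div4K (mmZ A B).
Definition okb A B := eqM (mapM sc4K (mul4 A B)) (mmZ A B).
Definition I4 : Mz := ((4,0,0,0),(0,0,0,0),(0,0,0,0),(4,0,0,0)).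
Definition Sz : Mz := ((4,0,0,0),(0,0,0,0),(0,0,0,0),(-4,0,0,0)).
Definition Tz : Mz := ((1,1,-1,1),(1,1,-1,1),(-1,1,-1,-1),(1,-1,1,1)).
Definition Uz : Mz := ((1,1,-1,1),(-1,1,-1,-1),(1,1,-1,1),(1,-1,1,1)).
Fixpoint pchk (A P : Mz) (n : nat) : bool :=
  match n with O => eqM P I4 | S n' => okb P A && pchk A (mul4 P A) n' end.
Definition Lst : seq Mz := [::
  ((4,0,0,0),(0,0,0,0),(0,0,0,0),(4,0,0,0));
  ((4,0,0,0),(0,0,0,0),(0,0,0,0),(-4,0,0,0));
  ((1,1,-1,1),(1,1,-1,1),(-1,1,-1,-1),(1,-1,1,1));
  ((1,1,-1,1),(-1,1,-1,-1),(1,1,-1,1),(1,-1,1,1));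
  ((1,1,-1,1),(1,1,-1,1),(1,-1,1,1),(-1,1,-1,-1));
  ((1,1,-1,1),(-1,1,-1,-1),(-1,-1,1,-1),(-1,1,-1,-1));
  ((1,1,-1,1),(-1,-1,1,-1),(-1,1,-1,-1),(-1,1,-1,-1));
  ((1,1,1,-1),(-1,1,1,1),(1,1,1,-1),(1,-1,-1,-1));
  ((0,2,2,0),(0,0,0,0),(0,0,0,0),(0,-2,-2,0));
  ((1,1,-1,1),(1,-1,1,1),(1,1,-1,1),(-1,1,-1,-1));
  ((0,0,0,0),(0,2,2,0),(0,2,2,0),(0,0,0,0));
  ((1,1,1,-1),(1,1,1,-1),(-1,1,1,1),(1,-1,-1,-1));
  ((1,1,-1,1),(-1,-1,1,-1),(1,-1,1,1),(1,-1,1,1));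
  ((1,1,1,-1),(-1,1,1,1),(-1,-1,-1,1),(-1,1,1,1));
  ((0,2,2,0),(0,0,0,0),(0,0,0,0),(0,2,2,0));
  ((1,1,-1,1),(1,-1,1,1),(-1,-1,1,-1),(1,-1,1,1));
  ((0,0,0,0),(0,2,2,0),(0,-2,-2,0),(0,0,0,0));
  ((1,1,1,-1),(1,1,1,-1),(1,-1,-1,-1),(-1,1,1,1));
  ((-1,1,1,1),(1,1,1,-1),(1,-1,-1,-1),(1,1,1,-1));
  ((0,0,0,0),(2,0,0,-2),(2,0,0,-2),(0,0,0,0));
  ((1,1,1,-1),(1,-1,-1,-1),(1,1,1,-1),(-1,1,1,1));
  ((2,0,2,0),(-2,0,-2,0),(2,0,-2,0),(2,0,-2,0));
  ((2,0,2,0),(2,0,2,0),(-2,0,2,0),(2,0,-2,0));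
  ((2,0,2,0),(2,0,-2,0),(-2,0,-2,0),(2,0,-2,0));
  ((-1,1,1,1),(1,-1,-1,-1),(1,1,1,-1),(1,1,1,-1));
  ((0,0,0,0),(0,-2,-2,0),(0,2,2,0),(0,0,0,0));
  ((2,0,-2,0),(-2,0,2,0),(2,0,2,0),(2,0,2,0));
  ((2,0,2,0),(-2,0,2,0),(2,0,2,0),(2,0,-2,0));
  ((1,1,1,-1),(-1,-1,-1,1),(-1,1,1,1),(-1,1,1,1));
  ((2,0,-2,0),(2,0,2,0),(-2,0,2,0),(2,0,2,0));
  ((-1,1,1,1),(1,1,1,-1),(-1,1,1,1),(-1,-1,-1,1));
  ((0,0,0,0),(2,0,0,-2),(-2,0,0,2),(0,0,0,0));
  ((1,1,1,-1),(1,-1,-1,-1),(-1,-1,-1,1),(1,-1,-1,-1));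
  ((2,0,2,0),(-2,0,-2,0),(-2,0,2,0),(-2,0,2,0));
  ((2,0,2,0),(2,0,2,0),(2,0,-2,0),(-2,0,2,0));
  ((2,0,2,0),(2,0,-2,0),(2,0,2,0),(-2,0,2,0));
  ((-1,1,1,1),(1,-1,-1,-1),(-1,-1,-1,1),(-1,-1,-1,1));
  ((0,0,0,0),(0,-2,-2,0),(0,-2,-2,0),(0,0,0,0));
  ((2,0,-2,0),(-2,0,2,0),(-2,0,-2,0),(-2,0,-2,0));
  ((2,0,2,0),(-2,0,2,0),(-2,0,-2,0),(-2,0,2,0));
  ((1,1,1,-1),(-1,-1,-1,1),(1,-1,-1,-1),(1,-1,-1,-1));
  ((2,0,-2,0),(2,0,2,0),(2,0,-2,0),(-2,0,-2,0));
  ((-1,1,1,1),(-1,-1,-1,1),(1,-1,-1,-1),(-1,-1,-1,1));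
  ((0,0,0,0),(0,0,4,0),(0,0,-4,0),(0,0,0,0));
  ((0,0,0,0),(-2,0,0,2),(2,0,0,-2),(0,0,0,0));
  ((-2,0,-2,0),(2,0,2,0),(2,0,-2,0),(2,0,-2,0));
  ((0,0,0,0),(4,0,0,0),(4,0,0,0),(0,0,0,0));
  ((2,0,-2,0),(2,0,-2,0),(2,0,2,0),(-2,0,-2,0));
  ((1,-1,1,1),(1,1,-1,1),(-1,1,-1,-1),(1,1,-1,1));
  ((0,0,0,0),(0,2,-2,0),(0,2,-2,0),(0,0,0,0));
  ((2,0,0,2),(0,0,0,0),(0,0,0,0),(2,0,0,2));
  ((0,0,0,0),(2,0,0,2),(-2,0,0,-2),(0,0,0,0));
  ((-1,1,1,1),(-1,1,1,1),(1,1,1,-1),(-1,-1,-1,1));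
  ((-2,0,2,0),(2,0,2,0),(2,0,-2,0),(2,0,2,0));
  ((-2,0,2,0),(2,0,-2,0),(2,0,2,0),(2,0,2,0));
  ((-2,0,-2,0),(2,0,-2,0),(2,0,2,0),(2,0,-2,0));
  ((0,0,0,0),(-2,0,0,-2),(2,0,0,2),(0,0,0,0));
  ((1,-1,1,1),(-1,1,-1,-1),(1,1,-1,1),(1,1,-1,1));
  ((0,0,0,0),(0,0,-4,0),(0,0,4,0),(0,0,0,0));
  ((2,0,-2,0),(-2,0,-2,0),(-2,0,2,0),(-2,0,-2,0));
  ((0,2,-2,0),(0,0,0,0),(0,0,0,0),(0,-2,2,0));
  ((-1,1,1,1),(-1,-1,-1,1),(-1,1,1,1),(1,1,1,-1));
  ((0,0,0,0),(0,0,4,0),(0,0,4,0),(0,0,0,0));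
  ((0,0,0,0),(-2,0,0,2),(-2,0,0,2),(0,0,0,0));
  ((-2,0,-2,0),(2,0,2,0),(-2,0,2,0),(-2,0,2,0));
  ((0,0,0,0),(4,0,0,0),(-4,0,0,0),(0,0,0,0));
  ((2,0,-2,0),(2,0,-2,0),(-2,0,-2,0),(2,0,2,0));
  ((1,-1,1,1),(1,1,-1,1),(1,-1,1,1),(-1,-1,1,-1));
  ((0,0,0,0),(0,2,-2,0),(0,-2,2,0),(0,0,0,0));
  ((2,0,0,2),(0,0,0,0),(0,0,0,0),(-2,0,0,-2));
  ((0,0,0,0),(2,0,0,2),(2,0,0,2),(0,0,0,0));
  ((-1,1,1,1),(-1,1,1,1),(-1,-1,-1,1),(1,1,1,-1));
  ((-2,0,2,0),(2,0,2,0),(-2,0,2,0),(-2,0,-2,0));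
  ((-2,0,2,0),(2,0,-2,0),(-2,0,-2,0),(-2,0,-2,0));
  ((-2,0,-2,0),(2,0,-2,0),(-2,0,-2,0),(-2,0,2,0));
  ((0,0,0,0),(-2,0,0,-2),(-2,0,0,-2),(0,0,0,0));
  ((1,-1,1,1),(-1,1,-1,-1),(-1,-1,1,-1),(-1,-1,1,-1));
  ((0,0,0,0),(0,0,-4,0),(0,0,-4,0),(0,0,0,0));
  ((2,0,-2,0),(-2,0,-2,0),(2,0,-2,0),(2,0,2,0));
  ((0,2,-2,0),(0,0,0,0),(0,0,0,0),(0,2,-2,0));
  ((0,0,4,0),(0,0,0,0),(0,0,0,0),(0,0,-4,0));
  ((1,-1,1,1),(-1,-1,1,-1),(-1,1,-1,-1),(-1,-1,1,-1));
  ((-2,0,2,0),(-2,0,-2,0),(2,0,-2,0),(-2,0,-2,0));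
  ((-2,0,-2,0),(-2,0,-2,0),(2,0,-2,0),(-2,0,2,0));
  ((-1,1,-1,-1),(-1,-1,1,-1),(-1,1,-1,-1),(1,1,-1,1));
  ((0,0,0,0),(0,-2,2,0),(0,2,-2,0),(0,0,0,0));
  ((0,0,0,0),(-4,0,0,0),(4,0,0,0),(0,0,0,0));
  ((-1,1,-1,-1),(1,-1,1,1),(1,1,-1,1),(1,1,-1,1));
  ((-1,1,-1,-1),(1,1,-1,1),(1,-1,1,1),(1,1,-1,1));
  ((1,-1,-1,-1),(-1,1,1,1),(1,1,1,-1),(1,1,1,-1));
  ((1,-1,1,1),(1,-1,1,1),(1,1,-1,1),(-1,-1,1,-1));
  ((-2,0,2,0),(-2,0,2,0),(2,0,2,0),(-2,0,-2,0));
  ((-1,-1,1,-1),(1,-1,1,1),(1,1,-1,1),(1,-1,1,1));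
  ((-2,0,-2,0),(-2,0,2,0),(2,0,2,0),(-2,0,2,0));
  ((-2,0,0,-2),(0,0,0,0),(0,0,0,0),(2,0,0,2));
  ((-1,-1,-1,1),(1,1,1,-1),(-1,1,1,1),(-1,1,1,1));
  ((1,-1,-1,-1),(1,1,1,-1),(-1,1,1,1),(1,1,1,-1));
  ((-1,-1,-1,1),(-1,1,1,1),(1,1,1,-1),(-1,1,1,1));
  ((-1,-1,1,-1),(1,1,-1,1),(1,-1,1,1),(1,-1,1,1));
  ((-1,1,-1,-1),(-1,1,-1,-1),(-1,-1,1,-1),(1,1,-1,1));
  ((0,0,4,0),(0,0,0,0),(0,0,0,0),(0,0,4,0));
  ((1,-1,1,1),(-1,-1,1,-1),(1,-1,1,1),(1,1,-1,1));
  ((-2,0,2,0),(-2,0,-2,0),(-2,0,2,0),(2,0,2,0));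
  ((-2,0,-2,0),(-2,0,-2,0),(-2,0,2,0),(2,0,-2,0));
  ((-1,1,-1,-1),(-1,-1,1,-1),(1,-1,1,1),(-1,-1,1,-1));
  ((0,0,0,0),(0,-2,2,0),(0,-2,2,0),(0,0,0,0));
  ((0,0,0,0),(-4,0,0,0),(-4,0,0,0),(0,0,0,0));
  ((-1,1,-1,-1),(1,-1,1,1),(-1,-1,1,-1),(-1,-1,1,-1));
  ((-1,1,-1,-1),(1,1,-1,1),(-1,1,-1,-1),(-1,-1,1,-1));
  ((1,-1,-1,-1),(-1,1,1,1),(-1,-1,-1,1),(-1,-1,-1,1));
  ((1,-1,1,1),(1,-1,1,1),(-1,-1,1,-1),(1,1,-1,1));
  ((-2,0,2,0),(-2,0,2,0),(-2,0,-2,0),(2,0,2,0));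
  ((-1,-1,1,-1),(1,-1,1,1),(-1,-1,1,-1),(-1,1,-1,-1));
  ((-2,0,-2,0),(-2,0,2,0),(-2,0,-2,0),(2,0,-2,0));
  ((-2,0,0,-2),(0,0,0,0),(0,0,0,0),(-2,0,0,-2));
  ((-1,-1,-1,1),(1,1,1,-1),(1,-1,-1,-1),(1,-1,-1,-1));
  ((1,-1,-1,-1),(1,1,1,-1),(1,-1,-1,-1),(-1,-1,-1,1));
  ((-1,-1,-1,1),(-1,1,1,1),(-1,-1,-1,1),(1,-1,-1,-1));
  ((-1,-1,1,-1),(1,1,-1,1),(-1,1,-1,-1),(-1,1,-1,-1));
  ((-1,1,-1,-1),(-1,1,-1,-1),(1,1,-1,1),(-1,-1,1,-1));
  ((-2,0,0,2),(0,0,0,0),(0,0,0,0),(2,0,0,-2));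
  ((0,-2,2,0),(0,0,0,0),(0,0,0,0),(0,2,-2,0));
  ((-1,-1,1,-1),(-1,1,-1,-1),(1,1,-1,1),(-1,1,-1,-1));
  ((1,-1,-1,-1),(1,-1,-1,-1),(1,1,1,-1),(-1,-1,-1,1));
  ((-1,-1,-1,1),(1,-1,-1,-1),(1,1,1,-1),(1,-1,-1,-1));
  ((2,0,0,-2),(0,0,0,0),(0,0,0,0),(-2,0,0,2));
  ((-1,-1,-1,1),(-1,-1,-1,1),(-1,1,1,1),(1,-1,-1,-1));
  ((-1,-1,1,-1),(-1,-1,1,-1),(1,-1,1,1),(-1,1,-1,-1));
  ((1,-1,-1,-1),(-1,-1,-1,1),(-1,1,1,1),(-1,-1,-1,1));
  ((0,0,-4,0),(0,0,0,0),(0,0,0,0),(0,0,4,0));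
  ((-2,0,0,2),(0,0,0,0),(0,0,0,0),(-2,0,0,2));
  ((0,-2,2,0),(0,0,0,0),(0,0,0,0),(0,-2,2,0));
  ((-1,-1,1,-1),(-1,1,-1,-1),(-1,-1,1,-1),(1,-1,1,1));
  ((1,-1,-1,-1),(1,-1,-1,-1),(-1,-1,-1,1),(1,1,1,-1));
  ((-1,-1,-1,1),(1,-1,-1,-1),(-1,-1,-1,1),(-1,1,1,1));
  ((2,0,0,-2),(0,0,0,0),(0,0,0,0),(2,0,0,-2));
  ((-1,-1,-1,1),(-1,-1,-1,1),(1,-1,-1,-1),(-1,1,1,1));
  ((-1,-1,1,-1),(-1,-1,1,-1),(-1,1,-1,-1),(1,-1,1,1));
  ((1,-1,-1,-1),(-1,-1,-1,1),(1,-1,-1,-1),(1,1,1,-1));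
  ((0,0,-4,0),(0,0,0,0),(0,0,0,0),(0,0,-4,0));
  ((0,-2,-2,0),(0,0,0,0),(0,0,0,0),(0,2,2,0));
  ((-4,0,0,0),(0,0,0,0),(0,0,0,0),(4,0,0,0));
  ((0,-2,-2,0),(0,0,0,0),(0,0,0,0),(0,-2,-2,0));
  ((-4,0,0,0),(0,0,0,0),(0,0,0,0),(-4,0,0,0))].
Definition inL (A : Mz) := List.existsb (eqM A) Lst.
Definition bigcheck : bool :=
  inL I4 && inL Sz && inL Tz && inL Uz &&
  List.forallb (fun B => List.forallb (fun g => okb B g && inL (mul4 B g)) [:: Sz; Tz; Uz]) Lst &&
  List.forallb (fun A => pchk A I4 12) Lst.
Lemma bigcheckT : bigcheck = true. Proof. vm_compute. reflexivity. Qed.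
End Comp.

Import Comp.
Local Open Scope ring_scope.


Definition Zr (z : Z) : algC := (int_of_Z z)%:~R.
Lemma ZrD x y : Zr (Z.add x y) = Zr x + Zr y.
Proof. by rewrite /Zr -intrD -(raddfD int_of_Z). Qed.
Lemma ZrB x y : Zr (Z.sub x y) = Zr x - Zr y.
Proof. by rewrite /Zr -intrB -(raddfB int_of_Z). Qed.
Lemma ZrM x y : Zr (Z.mul x y) = Zr x * Zr y.
Proof. by rewrite /Zr -intrM -(rmorphM int_of_Z). Qed.
Lemma Zr3 : Zr (Zpos 3) = 3. Proof. by []. Qed.
Lemma Zr4 : Zr (Zpos 4) = 4. Proof. by []. Qed.

Definition phi (x : Kz) : algC :=
  let: (a,b,c,d) := x in Zr a + Zr b * r3 + Zr c * 'i + Zr d * (r3 * 'i).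

Arguments phi : simpl never.
Arguments Zr : simpl never.
Lemma phiE a b c d : phi (a,b,c,d) = Zr a + Zr b * r3 + Zr c * 'i + Zr d * (r3 * 'i).
Proof. by []. Qed.
Lemma Zr0 : Zr Z0 = 0. Proof. by []. Qed.
Lemma Zr1 : Zr (Zpos 1) = 1. Proof. by []. Qed.
Lemma ZrN1 : Zr (Zneg 1) = -1. Proof. by []. Qed.
Lemma ZrN4 : Zr (Zneg 4) = -4. Proof. by []. Qed.
Lemma r3sq : r3 * r3 = 3.
Proof. by rewrite -expr2 sqrtCK. Qed.
Lemma isq : 'i * 'i = -1 :> algC.
Proof. by rewrite -expr2 sqrCi. Qed.

Lemma phi_add x y : phi (addK x y) = phi x + phi y.
Proof.
case: x => [[[a b] c] d]; case: y => [[[e f] g] h]; cbv beta iota delta [phi addK].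
rewrite !ZrD; ring.
Qed.

Lemma expand8 (A B C D E F G H : algC) : (A + B * r3 + C * 'i + D * (r3 * 'i)) * (E + F * r3 + G * 'i + H * (r3 * 'i))
  = (A*E + B*F*(r3*r3) + C*G*('i*'i) + D*H*(r3*r3)*('i*'i))
    + (A*F + B*E + (C*H + D*G)*('i*'i)) * r3
    + (A*G + C*E + (B*H + D*F)*(r3*r3)) * 'i
    + (A*H + D*E + B*G + C*F) * (r3 * 'i).
Proof. ring. Qed.

Lemma phi_mul x y : phi (mulK x y) = phi x * phi y.
Proof.
case: x => [[[a b] c] d]; case: y => [[[e f] g] h]; cbv beta iota delta [phi mulK].
rewrite !(ZrD, ZrB, ZrM, Zr3) expand8 r3sq isq. ring.
Qed.

Lemma phi_sc4 x : phi (sc4K x) = 4 * phi x.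
Proof.
case: x => [[[a b] c] d]; cbv beta iota delta [phi sc4K]. rewrite !ZrM Zr4; ring.
Qed.

Lemma eqK_eq x y : eqK x y -> x = y.
Proof.
case: x => [[[a b] c] d]; case: y => [[[e f] g] h] /=.
by move=> /andP[/andP[/andP[/Z.eqb_spec-> /Z.eqb_spec->] /Z.eqb_spec->] /Z.eqb_spec->].
Qed.

Lemma eqM_eq A B : eqM A B -> A = B.
Proof.
case: A => [[[a b] c] d]; case: B => [[[e f] g] h] /=.
by move=> /andP[/andP[/andP[/eqK_eq-> /eqK_eq->] /eqK_eq->] /eqK_eq->].
Qed.

Definition selM (A : Mz) (i j : 'I_2) : Kz :=
  let: (a,b,c,d) := A in
  if val i == 0%N then (if val j == 0%N then a else b) else (if val j == 0%N then c else d).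

Definition semR (A : Mz) : mx := \matrix_(i < 2, j < 2) phi (selM A i j).
Definition sem (A : Mz) : mx := 4^-1 *: semR A.

Lemma semR_mul A B : semR A * semR B = semR (mmZ A B).
Proof.
apply/matrixP => i j; rewrite !mxE big_ord_recr big_ord1 /= !mxE.
case: A => [[[a00 a01] a10] a11]; case: B => [[[b00 b01] b10] b11] /=.
case: i => [[|[|//]] ?]; case: j => [[|[|//]] ?] /=; by rewrite phi_add !phi_mul.
Qed.

Lemma semR_sc4 A : semR (mapM sc4K A) = 4 *: semR A.
Proof.
apply/matrixP => i j; rewrite !mxE.
case: A => [[[a00 a01] a10] a11] /=.
case: i => [[|[|//]] ?]; case: j => [[|[|//]] ?] /=; by rewrite phi_sc4.
Qed.

Lemma four_neq0 : (4 : algC) != 0. Proof. by rewrite pnatr_eq0. Qed.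

Lemma mul4_sem A B : okb A B -> sem A * sem B = sem (mul4 A B).
Proof.
move=> /eqM_eq E.
rewrite /sem -scalerAl -scalerAr scalerA semR_mul -E semR_sc4 scalerA.
by rewrite -mulrA mulVf ?four_neq0 // mulr1.
Qed.

Lemma sem_I4 : sem I4 = 1.
Proof.
apply/matrixP => i j; rewrite !mxE.
case: i => [[|[|//]] ?]; case: j => [[|[|//]] ?] /=; rewrite /Zr /=; 
  rewrite phiE ?(Zr0, Zr4) ?mul0r ?addr0 ?mulr0 ?mulVf ?four_neq0 //.
Qed.

Ltac entries := apply/matrixP => [[[|[|//]] ?]] [[|[|//]] ?]; rewrite !mxE /=;
  rewrite ?phiE ?(Zr0, Zr1, ZrN1, Zr4, ZrN4) ?mul0r ?addr0 ?add0r ?mulr0 ?mul1r ?mulN1r.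

Lemma sem_S : sem Sz = G7_s.
Proof.
rewrite /G7_s /sem /semR /mx_of_list. entries.
all: by rewrite ?mulrN ?mulVf ?four_neq0.
Qed.

Lemma semR_T : semR Tz = mx_of_list [:: [:: (1 + r3) + (-1 + r3) * 'i; (1 + r3) + (-1 + r3) * 'i];
                 [:: (-1 + r3) - (1 + r3) * 'i; (1 - r3) + (1 + r3) * 'i]].
Proof. rewrite /semR /mx_of_list. entries. all: ring. Qed.

Lemma sem_T : sem Tz = G7_t.
Proof. by rewrite /sem semR_T. Qed.

Lemma sem_U : sem Uz = G7_u.
Proof.
rewrite /G7_u -sem_T /sem linearZ /=; congr (_ *: _).
rewrite /semR; apply/matrixP => i j; rewrite !mxE.
by case: i => [[|[|//]] ?]; case: j => [[|[|//]] ?].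
Qed.


Lemma invE (x : mx) : invmx x = x^-1. Proof. by []. Qed.
Lemma unitE (x : mx) : (x \in unitmx) = (x \is a GRing.unit). Proof. by []. Qed.

Lemma inL_In A : inL A = true -> exists C, List.In C Lst /\ A = C.
Proof.
move=> /existsb_exists [C [HC HE]]; exists C; split => //; exact: eqM_eq.
Qed.

Lemma bc_parts :
  (inL I4 /\ inL Sz /\ inL Tz /\ inL Uz) /\
     (forall B, List.In B Lst -> forall g, List.In g [:: Sz; Tz; Uz] ->
        okb B g /\ inL (mul4 B g)) /\
     (forall A, List.In A Lst -> pchk A I4 12).
Proof.
have := bigcheckT; rewrite /bigcheck.
move=> /andP[/andP[/andP[/andP[/andP[h1 h2] h3] h4] /forallb_forall h5] /forallb_forall h6].
split; first by [].  split.
- move=> B HB g Hg; have := h5 B HB => /forallb_forall /(_ g Hg) /andP[] //.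
- by move=> A HA; exact: h6.
Qed.

Lemma pchk_sem A P n : pchk A P n -> sem P * sem A ^+ n = 1.
Proof.
elim: n P => [|n IH] P /=.
  by move=> /eqM_eq ->; rewrite expr0 mulr1 sem_I4.
move=> /andP[ok h]; have := IH _ h; rewrite -(mul4_sem ok) => <-.
by rewrite exprS mulrA.
Qed.

Definition img (g : mx) := exists A, List.In A Lst /\ g = sem A.
Definition Inv (g : mx) := img g /\ forall B, List.In B Lst -> img (sem B * g).

Lemma img_pow g : img g -> g ^+ 12 = 1.
Proof.
case=> A [HA ->]; have [_ [_ h6]] := bc_parts.
by have := pchk_sem (h6 A HA); rewrite sem_I4 mul1r.
Qed.

Lemma Inv1 : Inv 1.
Proof.
have [[h1 _] _] := bc_parts.
split.
  by have [C [HC E]] := inL_In h1; exists C; split => //; rewrite -E sem_I4.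
by move=> B HB; rewrite mulr1; exists B.
Qed.

Lemma InvM x y : Inv x -> Inv y -> Inv (x * y).
Proof.
move=> [[A [HA ->]] cx] [iy cy]; split; first exact: cy.
move=> B HB; have [C [HC E]] := cx B HB; rewrite mulrA E; exact: cy.
Qed.

Lemma InvX x n : Inv x -> Inv (x ^+ n).
Proof. by move=> h; elim: n => [|n IH]; rewrite ?expr0 ?exprS; [exact: Inv1| exact: InvM]. Qed.


Lemma InvGen g : In g [:: Sz; Tz; Uz] -> Inv (sem g).
Proof.
move=> Hg; have [[_ [h2 [h3 h4]]] [h5 _]] := bc_parts.
split.
  have : inL g by case: Hg => [<-|[<-|[<-|[]]]].
  by move=> /inL_In [C [HC E]]; exists C; rewrite E.
move=> B HB; have [ok hin] := h5 B HB g Hg.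
rewrite (mul4_sem ok); have [C [HC E]] := inL_In hin; exists C; by rewrite E.
Qed.

Lemma unit_of_pow (x : mx) : x ^+ 12 = 1 -> x \is a GRing.unit /\ x^-1 = x ^+ 11.
Proof.
move=> h.
have hu : x \is a GRing.unit.
  apply/unitrP; exists (x ^+ 11); split; first by rewrite -exprSr h.
  by rewrite -exprS h.
split => //; apply: (mulrI hu); rewrite mulrV // -exprS h //.
Qed.

Lemma InvV x : Inv x -> Inv (invmx x).
Proof.
move=> h; have [hu E] := unit_of_pow (img_pow h.1); rewrite invE E.
exact: InvX.
Qed.

Lemma G7_Inv x : G7 x -> Inv x.
Proof.
elim => [|y Hy|y z _ Hy _ Hz|y _ Hy].
- exact: Inv1.
- case: Hy => [->|[->|->]]; [rewrite -sem_S|rewrite -sem_T|rewrite -sem_U]; apply: InvGen; simpl; tauto.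
- exact: InvM.
- exact: InvV.
Qed.

Lemma G7_pow x : G7 x -> x ^+ 12 = 1.
Proof. by move=> /G7_Inv [h _]; exact: img_pow. Qed.


Definition goodG (G : mx -> Prop) :=
  G 1 /\ (forall x y, G x -> G y -> G (x * y)) /\ (forall x, G x -> G x^-1) /\
  (forall x, G x -> x ^+ 12 = 1).

Lemma gG1 G : goodG G -> G 1. Proof. by case. Qed.
Lemma gGM G : goodG G -> forall x y, G x -> G y -> G (x * y). Proof. by case=> _ []. Qed.
Lemma gGV G : goodG G -> forall x, G x -> G x^-1. Proof. by case=> _ [_ []]. Qed.
Lemma gGo G : goodG G -> forall x, G x -> x ^+ 12 = 1. Proof. by case=> _ [_ []]. Qed.
Lemma gGu G : goodG G -> forall x, G x -> x \is a GRing.unit.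
Proof. by move=> hG x Gx; have [] := unit_of_pow (gGo hG Gx). Qed.

Lemma goodG_gen R : (forall r, R r -> G7 r) -> goodG (gen R).
Proof.
move=> HR; have sub : forall x, gen R x -> G7 x.
  move=> x; elim => [|y Hy|y z _ Hy _ Hz|y _ Hy].
  - exact: gen_one.
  - exact: HR.
  - exact: gen_mul.
  - exact: gen_inv.
split; first exact: gen_one.
split; first by move=> x y; exact: gen_mul.
split; first by move=> x; exact: gen_inv.
by move=> x /sub /G7_pow.
Qed.

Lemma conj_refl G (hG : goodG G) x : conjugate_in G x x.
Proof. exists 1; split; first exact: gG1 hG. by rewrite invE invr1 mul1r mulr1. Qed.

Lemma conj_sym G (hG : goodG G) x y : conjugate_in G x y -> conjugate_in G y x.
Proof.
case=> h [Gh ->]; exists h^-1; split; first exact: gGV.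
have hu := gGu hG Gh.
by rewrite !invE invrK !mulrA mulrV // mul1r mulrK.
Qed.

Lemma conj_trans G (hG : goodG G) x y z :
  conjugate_in G x y -> conjugate_in G y z -> conjugate_in G x z.
Proof.
case=> h [Gh ->] [k [Gk ->]]; exists (k * h); split; first exact: gGM.
have hu := gGu hG Gh; have ku := gGu hG Gk.
by rewrite !invE invrM // !mulrA.
Qed.

Lemma refl_conj (a b : mx) : b \is a GRing.unit -> is_reflection a ->
  is_reflection (b^-1 * a * b).
Proof.
move=> hb; rewrite /is_reflection !mxrank_ker !mxrank_tr.
have -> : b^-1 * a * b - 1 = invmx b *m (a - 1) *m b.
  by rewrite mulmxE invE mulrBr mulrBl mulr1 mulVr.
have key : \rank (invmx b *m (a - 1)) = \rank (a - 1).
  rewrite -mxrank_tr trmx_mul mxrankMfree ?mxrank_tr //.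
  by rewrite row_free_unit unitmx_tr unitmx_inv.
by rewrite mxrankMfree ?row_free_unit // key.
Qed.

Lemma hstepE (T T' : seq mx) : hstep T T' <->
  exists A a b B, T = A ++ [:: a; b] ++ B /\ T' = A ++ [:: b; b^-1 * a * b] ++ B.
Proof.
split.
- case=> i [hi ->]; exists (take i T), (nth 0 T i), (nth 0 T i.+1), (drop i.+2 T).
  split; last by [].
  by rewrite -{1}(cat_take_drop i T) (drop_nth 0 (ltnW hi)) (drop_nth 0 hi).
- case=> A [a [b [B [-> ->]]]]; exists (size A); split.
    by rewrite !size_cat /=; lia.
  rewrite /hmove take_size_cat // !nth_cat ltnn subnn /= ltnNge leqnSn /= subSn // subnn /=.
  have -> : A ++ [:: a, b & B] = (A ++ [:: a; b]) ++ B by rewrite -catA.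
  have -> : (size A).+2 = size (A ++ [:: a; b]) by rewrite size_cat addn2.
  by rewrite drop_size_cat.
Qed.

Lemma prodT_cat A B : prodT (A ++ B) = prodT A * prodT B.
Proof. by rewrite /prodT big_cat. Qed.
Lemma prodT_cons a A : prodT (a :: A) = a * prodT A.
Proof. by rewrite /prodT big_cons. Qed.
Lemma prodT_nil : prodT [::] = 1.
Proof. by rewrite /prodT big_nil. Qed.

Definition SCrel G (X Y : seq mx) := Permutation X Y \/ Forall2 (conjugate_in G) X Y.
Definition SC G := clos_refl_trans _ (SCrel G).

Lemma F2_refl (R : mx -> mx -> Prop) l : (forall x, R x x) -> Forall2 R l l.
Proof. by move=> h; elim: l => [|x l IH]; constructor. Qed.

Lemma F2_sym (R : mx -> mx -> Prop) l l' : (forall x y, R x y -> R y x) ->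
  Forall2 R l l' -> Forall2 R l' l.
Proof. by move=> h; elim => [|x y l1 l2 hxy _ IH]; constructor; auto. Qed.

Lemma F2_trans (R : mx -> mx -> Prop) l l' l'' :
  (forall x y z, R x y -> R y z -> R x z) ->
  Forall2 R l l' -> Forall2 R l' l'' -> Forall2 R l l''.
Proof.
move=> h H; elim: H l'' => [|x y l1 l2 hxy _ IH] l'' H2; first by inversion H2.
inversion H2; subst; constructor; eauto.
Qed.

Lemma mem_In (x : mx) s : List.In x s -> x \in s.
Proof.
elim: s => //= y s IH [->|/IH h]; rewrite inE ?eqxx //.
by rewrite h orbT.
Qed.

Lemma step_inv G (hG : goodG G) X Y : refl_fact G X -> hstep X Y ->
  [/\ refl_fact G Y, prodT X = prodT Y, SC G X Y & size X = size Y].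
Proof.
move=> rf /hstepE [A [a [b [B [EX EY]]]]]; subst X Y.
have [Ga ra] : G a /\ is_reflection a by apply: (rf a); rewrite !mem_cat !inE eqxx /= orbT.
have [Gb rb] : G b /\ is_reflection b by apply: (rf b); rewrite !mem_cat !inE eqxx /= !orbT.
have bu := gGu hG Gb.
split.
- move=> r; rewrite !mem_cat !inE. move=> /orP[rA|/orP[/orP[/eqP->|/eqP->]|rB]].
  + by apply: rf; rewrite mem_cat rA.
  + by [].
  + split; first by apply: gGM => //; apply: gGM => //; exact: gGV.
    exact: refl_conj.
  + by apply: rf; rewrite !mem_cat rB !orbT.
- rewrite !prodT_cat !prodT_cons; congr (_ * _); rewrite !mulrA.
  by congr (_ * _); rewrite mulrV // mul1r.
- apply: rt_trans (rt_step _ _ _ _ (or_introl _)) (rt_step _ _ _ _ (or_intror _)).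
    exact: Permutation_app_head (perm_swap _ _ _).
  apply: Forall2_app; first exact: F2_refl (conj_refl hG).
  constructor; first exact: conj_refl.
  constructor; last exact: F2_refl (conj_refl hG).
  exists b^-1; split; first exact: gGV.
  by rewrite invE invrK !mulrA mulrV // mul1r mulrK.
- by rewrite !size_cat.
Qed.

Lemma hurw_inv G (hG : goodG G) X Y : hurwitz_equiv X Y -> refl_fact G X ->
  [/\ refl_fact G Y, prodT X = prodT Y, SC G X Y & size X = size Y].
Proof.
move=> H; induction H as [x y st|x|x y z _ IH1 _ IH2] => rf.
- exact: step_inv.
- by split => //; exact: rt_refl.
- have [rf1 p1 s1 z1] := IH1 rf; have [rf2 p2 s2 z2] := IH2 rf1.
  split => //; [by rewrite p1 | exact: rt_trans s1 s2 | by rewrite z1].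
Qed.


Lemma F2_cons_r (R : mx -> mx -> Prop) U y l : Forall2 R U (y :: l) ->
  exists u U', U = u :: U' /\ R u y /\ Forall2 R U' l.
Proof. by move=> h; inversion h; subst; do 2 eexists; split; [reflexivity|split]. Qed.
Lemma F2_nil_r (R : mx -> mx -> Prop) U : Forall2 R U [::] -> U = [::].
Proof. by move=> h; inversion h. Qed.

Lemma F2_perm (R : mx -> mx -> Prop) Y Z : Permutation Y Z ->
  forall U, Forall2 R U Y -> exists W, Permutation U W /\ Forall2 R W Z.
Proof.
elim => [|x l l' _ IH|x y l|l l' l'' _ IH1 _ IH2] U h.
- rewrite (F2_nil_r h); exists [::]; split; constructor.
- have [u [U' [-> [Hux HU']]]] := F2_cons_r h.
  have [W [p f]] := IH _ HU'; exists (u :: W); split; [exact: perm_skip|by constructor].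
- have [u1 [U1 [-> [H1 HU1]]]] := F2_cons_r h.
  have [u2 [U2 [-> [H2 HU2]]]] := F2_cons_r HU1.
  exists [:: u2, u1 & U2]; split; first exact: perm_swap.
  by apply: Forall2_cons => //; apply: Forall2_cons.
- have [W1 [p1 f1]] := IH1 _ h; have [W2 [p2 f2]] := IH2 _ f1.
  exists W2; split => //; exact: Permutation_trans p1 p2.
Qed.

Lemma same_of_SC G (hG : goodG G) X Y : SC G X Y -> same_classes G X Y.
Proof.
move=> /clos_rt_rtn1_iff H; elim: H => [|Y' Z st _ [U [p f]]].
- exists X; split; [exact: Permutation_refl | exact: F2_refl (conj_refl hG)].
- case: st => [pz|fz].
  + have [W [pw fw]] := F2_perm pz f; exists W; split => //; exact: Permutation_trans p pw.
  + exists U; split => //; exact: F2_trans (conj_trans hG) f fz.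
Qed.

Lemma SC_of_same G X Y : same_classes G X Y -> SC G X Y.
Proof.
case=> U [p f]; apply: rt_trans (rt_step _ _ _ _ (or_introl p)) (rt_step _ _ _ _ (or_intror f)).
Qed.

Lemma SC_sym G (hG : goodG G) X Y : SC G X Y -> SC G Y X.
Proof.
elim => [x y [p|f]|x|x y z _ IH1 _ IH2].
- apply: rt_step; left; exact: Permutation_sym.
- apply: rt_step; right; exact: F2_sym (conj_sym hG) f.
- exact: rt_refl.
- exact: rt_trans IH2 IH1.
Qed.

Lemma perm_cancel G (hG : goodG G) P' U1 c c1 :
  Permutation (P' ++ [:: c]) (U1 ++ [:: c1]) -> conjugate_in G c1 c -> SC G U1 P'.
Proof.
move=> p hc.
have p' : Permutation (c :: P') (c1 :: U1).
  apply: Permutation_trans (Permutation_app_comm [:: c] P') _.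
  apply: Permutation_trans p _; exact: Permutation_app_comm.
have : List.In c (c1 :: U1) by apply: (Permutation_in _ p'); left.
case=> [E|inU].
- subst c1; apply: rt_step; left; apply: Permutation_sym; exact: Permutation_cons_inv p'.
- have [A [B E]] := in_split _ _ inU; subst U1.
  have pP : Permutation P' ((c1 :: A) ++ B).
    apply: (@Permutation_cons_app_inv _ _ (c1 :: A) B c).
    exact: p'.
  apply: rt_trans (rt_step _ _ _ _ (or_intror _)) _.
    exact: (Forall2_app (F2_refl _ (conj_refl hG)) (Forall2_cons _ _ (conj_sym hG hc) (F2_refl _ (conj_refl hG)))).
  apply: rt_trans (rt_step _ _ _ _ (or_introl _)) (rt_step _ _ _ _ (or_introl _)).
    apply: Permutation_sym; exact: Permutation_middle.
  exact: Permutation_sym.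
Qed.

Lemma SC_cancel G (hG : goodG G) P P' c : SC G (P ++ [:: c]) (P' ++ [:: c]) -> SC G P P'.
Proof.
move=> /(SC_sym hG) /(same_of_SC hG) [U [p f]].
have [U1 [U2 [f1 [f2 E]]]] := Forall2_app_inv_r _ _ f; subst U.
have [c1 [U2' [E2 [hc f3]]]] := F2_cons_r f2; subst U2.
rewrite (F2_nil_r f3) in p.
apply: rt_trans (rt_step _ _ _ _ (or_intror _)) (perm_cancel hG p hc).
exact: F2_sym (conj_sym hG) f1.
Qed.

Lemma hurw_cat X Y s : hurwitz_equiv X Y -> hurwitz_equiv (X ++ s) (Y ++ s).
Proof.
move=> H; induction H as [x y st|x|x y z _ h1 _ h2].
- apply: rt_step; apply/hstepE; move/hstepE: st => [A [a [b [B [-> ->]]]]].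
  by exists A, a, b, (B ++ s); rewrite -!catA.
- exact: rt_refl.
- exact: rt_trans h1 h2.
Qed.


Lemma unitM (x y : mx) : x \is a GRing.unit -> y \is a GRing.unit -> x * y \is a GRing.unit.
Proof.
move=> hx hy; have hx' : x \in unitmx := hx; have hy' : y \in unitmx := hy.
have h : x *m y \in unitmx by rewrite unitmx_mul hx' hy'.
exact: h.
Qed.

Definition fH (p : mx * mx) : mx * mx := (p.2, p.2^-1 * p.1 * p.2).

Lemma iter_path A B j p :
  hurwitz_equiv (A ++ [:: p.1; p.2] ++ B)
                (A ++ [:: (iter j fH p).1; (iter j fH p).2] ++ B).
Proof.
elim: j => [|j IH]; first exact: rt_refl.
apply: rt_trans IH _; apply: rt_step; apply/hstepE.
by exists A, (iter j fH p).1, (iter j fH p).2, B.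
Qed.

Lemma fH2 (a b : mx) : a \is a GRing.unit -> b \is a GRing.unit ->
  fH (fH (a, b)) = ((a * b)^-1 * a * (a * b), (a * b)^-1 * b * (a * b)).
Proof.
move=> au bu; rewrite /fH /=; congr (_, _).
  by rewrite invrM // -!mulrA mulKr.
have cu : b^-1 * a * b \is a GRing.unit by apply: unitM => //; apply: unitM; rewrite ?unitrV.
have ab : b^-1 * a \is a GRing.unit by apply: unitM; rewrite ?unitrV.
rewrite !invrM ?unitrV // invrK.
by rewrite -!mulrA mulVKr.
Qed.

Lemma iter_even (a b : mx) j : a \is a GRing.unit -> b \is a GRing.unit ->
  iter (2 * j) fH (a, b) =
   (((a * b) ^+ j)^-1 * a * (a * b) ^+ j, ((a * b) ^+ j)^-1 * b * (a * b) ^+ j).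
Proof.
move=> au bu; set g := a * b.
have gu : g \is a GRing.unit by apply: unitM.
elim: j => [|j IH]; first by rewrite muln0 /= expr0 invr1 !mul1r !mulr1.
rewrite mulnS iterD IH /=.
set h := g ^+ j.
have hu : h \is a GRing.unit by rewrite unitrX.
have a'u : h^-1 * a * h \is a GRing.unit by do 2 apply: unitM => //; rewrite unitrV.
have b'u : h^-1 * b * h \is a GRing.unit by do 2 apply: unitM => //; rewrite unitrV.
rewrite fH2 //.
have cgh : g * h = h * g by rewrite /h; apply: commrX.
have E : (h^-1 * a * h) * (h^-1 * b * h) = g.
  by rewrite -!mulrA mulVKr // [a * (b * h)]mulrA -/g cgh mulKr.
rewrite E exprSr -/h (invrM hu gu); congr (_, _); by rewrite !mulrA.
Qed.

Lemma rev_step G (hG : goodG G) X Y : refl_fact G X -> hstep X Y -> hurwitz_equiv Y X.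
Proof.
move=> rf /hstepE [A [a [b [B [EX EY]]]]]; subst X Y.
have [Ga _] : G a /\ is_reflection a by apply: (rf a); rewrite !mem_cat !inE eqxx /= orbT.
have [Gb _] : G b /\ is_reflection b by apply: (rf b); rewrite !mem_cat !inE eqxx /= !orbT.
have au := gGu hG Ga; have bu := gGu hG Gb.
have hp := iter_path A B 23 (fH (a, b)).
rewrite -iterSr (iter_even 12 au bu) (gGo hG (gGM hG Ga Gb)) invr1 !mul1r !mulr1 in hp.
exact hp.
Qed.

Lemma rev_equiv G (hG : goodG G) X Y : hurwitz_equiv X Y -> refl_fact G X -> hurwitz_equiv Y X.
Proof.
move=> H; induction H as [x y st|x|x y z h1 IH1 h2 IH2] => rf.
- exact: (rev_step hG rf st).
- exact: rt_refl.
- have [rfy _ _ _] := hurw_inv hG h1 rf.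
  exact: rt_trans (IH2 rfy) (IH1 rf).
Qed.

Lemma pigeon (P : mx -> mx -> Prop) (S T : seq mx) :
  (forall x, List.In x T -> exists c, c \in S /\ P x c) -> (size S < size T)%N ->
  exists c, c \in S /\ exists L1 x L2 y L3,
    T = L1 ++ x :: L2 ++ y :: L3 /\ P x c /\ P y c.
Proof.
elim: T S => [|x T IH] S hT hs; first by [].
have [c [cS Pxc]] := hT x (or_introl erefl).
case: (classic (exists y, List.In y T /\ P y c)) => [[y [yT Pyc]]|nE].
- have [L2 [L3 E]] := in_split _ _ yT.
  exists c; split => //; exists [::], x, L2, y, L3; by rewrite E.
- have hT' : forall z, List.In z T -> exists c', c' \in rem c S /\ P z c'.
    move=> z zT; have [c' [c'S Pzc']] := hT z (or_intror zT).
    exists c'; split => //; apply: rem_mem => //.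
    by apply/eqP => E; apply: nE; exists z; rewrite -E.
  have hs' : (size (rem c S) < size T)%N.
    by rewrite size_rem // -ltnS prednK //; case: (S) cS.
  have [c' [c'S [L1 [x' [L2 [y [L3 [E [P1 P2]]]]]]]]] := IH _ hT' hs'.
  exists c'; split; first exact: mem_rem c'S.
  by exists (x :: L1), x', L2, y, L3; rewrite E.
Qed.

Definition coll (P : mx -> Prop) (T : seq mx) :=
  exists L1 x L2 y L3, T = L1 ++ x :: L2 ++ y :: L3 /\ P x /\ P y.

Lemma coll_perm P T U : Permutation T U -> coll P T -> coll P U.
Proof.
move=> p [L1 [x [L2 [y [L3 [E [Px Py]]]]]]]; subst T.
have xU : List.In x U by apply: (Permutation_in _ p); apply: in_elt.
have [U1 [U2 E]] := in_split _ _ xU; subst U.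
have p2 := Permutation_app_inv _ _ _ _ _ p.
have yU : List.In y (U1 ++ U2).
  apply: (Permutation_in _ p2); apply: in_or_app; right; apply: in_elt.
case: (in_app_or _ _ _ yU) => [yU1|yU2].
- have [V1 [V2 E]] := in_split _ _ yU1; subst U1.
  by exists V1, y, V2, x, U2; rewrite -app_assoc.
- have [V1 [V2 E]] := in_split _ _ yU2; subst U2.
  by exists U1, x, V1, y, V2.
Qed.


Lemma F2_cons_l (R : mx -> mx -> Prop) x l T : Forall2 R (x :: l) T ->
  exists t T', T = t :: T' /\ R x t /\ Forall2 R l T'.
Proof. by move=> h; inversion h; subst; do 2 eexists; split; [reflexivity|split]. Qed.

Lemma coll_F2 G (hG : goodG G) c U T : Forall2 (conjugate_in G) U T ->
  coll (fun x => conjugate_in G x c) U -> coll (fun x => conjugate_in G x c) T.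
Proof.
move=> f [L1 [x [L2 [y [L3 [E [Px Py]]]]]]]; subst U; simpl in Px, Py.
have [L1' [R1 [_ [f1 ->]]]] := Forall2_app_inv_l _ _ f.
have [x' [R1' [E1 [hx f2]]]] := F2_cons_l f1; subst R1.
have [L2' [R2 [_ [f3 ->]]]] := Forall2_app_inv_l _ _ f2.
have [y' [L3' [E3 [hy f4]]]] := F2_cons_l f3; subst R2.
exists L1', x', L2', y', L3'; split; first by [].
simpl; split.
- have h1 := conj_sym hG hx. exact: (conj_trans hG h1 Px).
- have h1 := conj_sym hG hy. exact: (conj_trans hG h1 Py).
Qed.

Lemma coll_same G (hG : goodG G) c T T' : same_classes G T T' ->
  coll (fun x => conjugate_in G x c) T -> coll (fun x => conjugate_in G x c) T'.
Proof. case=> U [p f] h; exact: (@coll_F2 G hG c _ _ f (coll_perm p h)). Qed.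

Lemma coll_idx (P : mx -> Prop) T : coll P T ->
  exists i j, (i < j)%N /\ (j < size T)%N /\ P (nth 0 T i) /\ P (nth 0 T j).
Proof.
case=> L1 [x [L2 [y [L3 [-> [Px Py]]]]]].
exists (size L1), (size L1 + (size L2).+1)%N; split; first by lia.
split; first by rewrite !size_cat /= size_cat /=; lia.
rewrite !nth_cat ltnn subnn /=; split => //.
rewrite ltnNge leq_addr /= addKn /= nth_cat ltnn subnn /=.
by [].
Qed.

Lemma split_last (s : seq mx) k : size s = k -> (0 < k)%N ->
  s = take k.-1 s ++ [:: last 0 s].
Proof.
move=> <-; case/lastP: s => [//|s x] _.
by rewrite size_rcons /= -cats1 take_size_cat // last_cat.
Qed.

Lemma coll_size (P : mx -> Prop) T : coll P T -> (1 < size T)%N.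
Proof. case=> L1 [x [L2 [y [L3 [-> _]]]]]; rewrite !size_cat /= size_cat /=; lia. Qed.


Lemma prefix_rf G P (c : mx) : refl_fact G (P ++ [:: c]) -> refl_fact G P.
Proof. by move=> rf r rP; apply: rf; rewrite mem_cat rP. Qed.

Theorem lemma3p18 (R : mx -> Prop)
  (HR : forall r, R r -> G7 r /\ is_reflection r)
  (n m : nat)
  (Hn : num_refl_classes (gen R) n)
  (Hnm : (n <= m)%N)
  (Hsearch : forall k, (m < k)%N -> class_searchable (gen R) k)
  (Hbase : forall k, (1 <= k <= m)%N -> hurwitz_criterion (gen R) k) :
  forall k, (1 <= k)%N -> hurwitz_criterion (gen R) k.
Proof.
have hG : goodG (gen R) := goodG_gen (fun r Rr => (HR r Rr).1).
case: Hn => reps [sz [repsG [_ repsAll]]].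
suff main : forall K k, (k <= K)%N -> (1 <= k)%N -> hurwitz_criterion (gen R) k.
  by move=> k hk; exact: (main k k (leqnn k) hk).
elim => [|K IH] k hkK hk1; first by case: k hkK hk1.
case: (leqP k m) => hkm; first by apply: Hbase; rewrite hk1 hkm.
move=> T T' sT sT' rfT rfT' gT gT'; split.
  move=> h; have [_ p s _] := hurw_inv hG h rfT; split => //; exact: (same_of_SC hG s).
case=> hp hs.
have hT : forall x, List.In x T -> exists c, c \in reps /\ conjugate_in (gen R) x c.
  move=> x /mem_In xT; have [Gx rx] := rfT x xT.
  by have [c cr hc] := repsAll x Gx rx; exists c.
have hsz : (size reps < size T)%N by rewrite sz sT; exact: (leq_ltn_trans Hnm hkm).
have [c [cr cT]] := pigeon hT hsz.
have [Gc rc] := repsG c cr.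
have cT' := @coll_same _ hG c _ _ hs cT.
have k2 := coll_size cT; rewrite sT in k2.
have cc := conj_refl hG c.
have [T1 [h1 [l1 g1]]] := Hsearch k hkm T sT rfT gT c Gc rc
  (let: ex_intro i (ex_intro j (conj a (conj b d))) := coll_idx cT in
     ex_intro _ i (ex_intro _ j (conj a (conj (eq_ind _ (fun z => (j < z)%N) b _ sT) d)))) c cc.
have [T1' [h1' [l1' g1']]] := Hsearch k hkm T' sT' rfT' gT' c Gc rc
  (let: ex_intro i (ex_intro j (conj a (conj b d))) := coll_idx cT' in
     ex_intro _ i (ex_intro _ j (conj a (conj (eq_ind _ (fun z => (j < z)%N) b _ sT') d)))) c cc.
have [rf1 p1 s1 z1] := hurw_inv hG h1 rfT.
have [rf1' p1' s1' z1'] := hurw_inv hG h1' rfT'.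
have k0 : (0 < k)%N by lia.
have E1 := split_last (etrans (esym z1) sT) k0.
have E1' := split_last (etrans (esym z1') sT') k0.
rewrite l1 in E1; rewrite l1' in E1'.
set P := take k.-1 T1 in E1 g1; set P' := take k.-1 T1' in E1' g1'.
have sP : size P = k.-1 by rewrite /P size_takel // -z1 sT leq_pred.
have sP' : size P' = k.-1 by rewrite /P' size_takel // -z1' sT' leq_pred.
have rfP : refl_fact (gen R) P by apply: (@prefix_rf _ _ c); rewrite -E1.
have rfP' : refl_fact (gen R) P' by apply: (@prefix_rf _ _ c); rewrite -E1'.
have prP : prodT P = prodT P'.
  have cu := gGu hG Gc; apply: (mulIr cu).
  have := etrans (esym p1) (etrans hp p1').
  by rewrite E1 E1' !prodT_cat !prodT_cons prodT_nil !mulr1.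
have scP : same_classes (gen R) P P'.
  apply: (same_of_SC hG); apply: (@SC_cancel _ hG _ _ c).
  rewrite -E1 -E1'.
  exact: (rt_trans _ _ _ _ _ (SC_sym hG s1) (rt_trans _ _ _ _ _ (SC_of_same hs) s1')).
have crit : hurwitz_criterion (gen R) k.-1.
  case: (leqP k.-1 m) => h.
    by apply: Hbase; rewrite h andbT; lia.
  by apply: IH; lia.
have hPP := (crit P P' sP sP' rfP rfP' g1 g1').2 (conj prP scP).
have lift := hurw_cat [:: c] hPP.
rewrite -E1 -E1' in lift.
exact: (rt_trans _ _ _ _ _ h1 (rt_trans _ _ _ _ _ lift (rev_equiv hG h1' rfT'))).
Qed.
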